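(* Let $k$ be a field, $J,K$ proper monomial ideals in $Q=k[x,y,z]$, and $I=JK$. Then $[I:x]\cdot[I:(y,z)]\subseteq I$.
   Context: For ideals $I,L$ of $Q$, $I:L=\{f\in Q: fL\subseteq I\}$ and $I:f=I:(f)$. *)

(* Defs.v *)
From HB Require Import structures.
From mathcomp Require Import all_boot all_order all_algebra.
Set Implicit Arguments. Unset Strict Implicit. Unset Printing Implicit Defensive.
Import GRing.Theory.
Local Open Scope ring_scope.

(* Q = k[x,y,z] := ((k[z])[y])[x] *)
Definition Q (k : fieldType) : comNzRingType := {poly {poly {poly k}}}.

Definition varx (k : fieldType) : Q k := 'X.
Definition vary (k : fieldType) : Q k := ('X)%:P.
Definition varz (k : fieldType) : Q k := (('X)%:P)%:P.

Definition mono {k : fieldType} (a b c : nat) : Q k :=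
  varx k ^+ a * vary k ^+ b * varz k ^+ c.

Definition is_monomial {k : fieldType} (m : Q k) : Prop :=
  exists a b c, m = @mono k a b c.

Definition subsetQ (k : fieldType) := Q k -> Prop.

Definition is_idealQ {k : fieldType} (I : subsetQ k) : Prop :=
  [/\ I 0,
      (forall f g, I f -> I g -> I (f + g)) &
      (forall r f, I f -> I (r * f))].

Definition gen {k : fieldType} (S : subsetQ k) : subsetQ k :=
  fun f => exists rs : seq (Q k * Q k),
    (forall p, p \in rs -> S p.2) /\ f = \sum_(p <- rs) p.1 * p.2.

Definition subsetQI {k : fieldType} (I L : subsetQ k) : Prop :=
  forall f, I f -> L f.

Definition proper_idealQ {k : fieldType} (I : subsetQ k) : Prop :=
  is_idealQ I /\ ~ I 1.

Definition monomial_ideal {k : fieldType} (I : subsetQ k) : Prop :=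
  is_idealQ I /\ (forall f, I f <-> gen (fun m => is_monomial m /\ I m) f).

Definition idmul {k : fieldType} (I L : subsetQ k) : subsetQ k :=
  gen (fun h => exists f g, I f /\ L g /\ h = f * g).

Definition colon {k : fieldType} (I L : subsetQ k) : subsetQ k :=
  fun f => forall g, L g -> I (f * g).

Definition principalQ {k : fieldType} (f : Q k) : subsetQ k :=
  gen (fun g => g = f).
Definition ideal_yz (k : fieldType) : subsetQ k :=
  gen (fun g => g = vary k \/ g = varz k).

Arguments varx k : clear implicits.
Arguments vary k : clear implicits.
Arguments varz k : clear implicits.
Arguments ideal_yz k : clear implicits.

(* Main.v *)
Require Import Defs.
From HB Require Import structures.
From mathcomp Require Import all_boot all_order all_algebra.
From mathcomp Require Import ring zify.
Set Implicit Arguments. Unset Strict Implicit. Unset Printing Implicit Defensive.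
Import GRing.Theory.
Local Open Scope ring_scope.

Section S.
Variable k : fieldType.
Implicit Types f g h : Q k.

Definition c3 f a b c := f`_a`_b`_c.



Lemma sum_neq0 (R : nmodType) (I : Type) (r : seq I) (F : I -> R) :
  \sum_(i <- r) F i != 0 -> exists i, F i != 0.
Proof.
elim: r => [|x r IH]; first by rewrite big_nil eqxx.
rewrite big_cons; case: (eqVneq (F x) 0) => [->|]; last by exists x.
by rewrite add0r.
Qed.

Lemma mul_neq0 (R : pzSemiRingType) (x y : R) : x * y != 0 -> x != 0 /\ y != 0.
Proof.
move=> H; split; apply: contraNneq H => ->; by rewrite ?mul0r ?mulr0.
Qed.

Lemma c3M f g a b c : c3 (f * g) a b c != 0 -> exists i j l,
  [/\ (i <= a)%N, (j <= b)%N, (l <= c)%N, c3 f i j l != 0 &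
      c3 g (a - i) (b - j) (c - l) != 0].
Proof.
rewrite /c3 coefM !coef_sum => /sum_neq0 [i].
rewrite coefM !coef_sum => /sum_neq0 [j].
rewrite coefM => /sum_neq0 [l] /mul_neq0 [H1 H2].
exists i, j, l; split => //; rewrite -ltnS; exact: ltn_ord.
Qed.

Lemma c3D f g a b c : c3 (f + g) a b c = c3 f a b c + c3 g a b c.
Proof. by rewrite /c3 !coefD. Qed.

Lemma c3x f a b c : c3 (f * varx k) a.+1 b c = c3 f a b c.
Proof. by rewrite /c3 mulrC /varx coefXM. Qed.
Lemma c3y f a b c : c3 (f * vary k) a b.+1 c = c3 f a b c.
Proof. by rewrite /c3 mulrC /vary coefCM coefXM. Qed.
Lemma c3z f a b c : c3 (f * varz k) a b c.+1 = c3 f a b c.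
Proof. by rewrite /c3 mulrC /varz !coefCM coefXM. Qed.

Lemma c3xM f a b c : c3 (varx k * f) a b c != 0 -> (0 < a)%N /\ c3 f a.-1 b c != 0.
Proof. by rewrite /c3 /varx coefXM; case: a => [|?] /=; rewrite ?coef0 ?eqxx. Qed.
Lemma c3yM f a b c : c3 (vary k * f) a b c != 0 -> (0 < b)%N /\ c3 f a b.-1 c != 0.
Proof. by rewrite /c3 /vary coefCM coefXM; case: b => [|?] /=; rewrite ?coef0 ?eqxx. Qed.
Lemma c3zM f a b c : c3 (varz k * f) a b c != 0 -> (0 < c)%N /\ c3 f a b c.-1 != 0.
Proof. by rewrite /c3 /varz !coefCM coefXM; case: c => [|?] /=; rewrite ?coef0 ?eqxx. Qed.

Lemma c3mono a b c i j l : c3 (@mono k a b c) i j l != 0 ->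
  [/\ (a <= i)%N, (b <= j)%N & (c <= l)%N].
Proof.
rewrite /mono -mulrA -[varz k ^+ c]mulr1.
elim: a i => [|a IH] i.
  rewrite expr0 mul1r => H. suff: (b <= j)%N /\ (c <= l)%N by case.
  elim: b j H => [|b IHb] j.
    rewrite expr0 mul1r; elim: c l => [|c IHc] l; first by [].
    by rewrite exprS -mulrA => /c3zM [h /IHc [_ h2]]; split => //; lia.
  by rewrite exprS -mulrA => /c3yM [h /IHb [h1 h2]]; split => //; lia.
by rewrite exprS -mulrA => /c3xM [h /IH [h1 h2 h3]]; split => //; lia.
Qed.

Lemma monoM a b c a' b' c' :
  @mono k a b c * mono a' b' c' = mono (a + a') (b + b') (c + c').
Proof. rewrite /mono !exprD; ring. Qed.

Lemma mono0 : @mono k 0 0 0 = 1.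
Proof. by rewrite /mono !expr0 !mulr1. Qed.

Lemma pexp (R : nzRingType) (p : {poly R}) : p = \sum_(i < size p) (p`_i)%:P * 'X^i.
Proof. by rewrite -{1}[p]coefK poly_def; apply eq_bigr => i _; rewrite mul_polyC. Qed.

Lemma expand f : f = \sum_(i < size f) \sum_(j < size f`_i) \sum_(l < size f`_i`_j)
   (f`_i`_j`_l)%:P%:P%:P * mono i j l.
Proof.
rewrite {1}[f]pexp; apply eq_bigr => i _.
rewrite {1}[f`_i]pexp rmorph_sum mulr_suml; apply eq_bigr => j _.
rewrite {1}[f`_i`_j]pexp !rmorph_sum !mulr_suml rmorph_sum mulr_suml; apply eq_bigr => l _.
rewrite /mono /varx /vary /varz !rmorphM /= !rmorphXn /=. ring.
Qed.

Definition sup (P : nat -> nat -> nat -> Prop) f :=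
  forall a b c, c3 f a b c != 0 -> P a b c.
Definition up (P : nat -> nat -> nat -> Prop) := forall a b c a' b' c',
  P a b c -> (a <= a')%N -> (b <= b')%N -> (c <= c')%N -> P a' b' c'.

Lemma sup_add P f g : sup P f -> sup P g -> sup P (f + g).
Proof.
move=> hf hg a b c; rewrite c3D.
case: (eqVneq (c3 f a b c) 0) => [->|/hf //]; rewrite add0r; exact: hg.
Qed.

Lemma sup0 P : sup P 0.
Proof. by move=> a b c; rewrite /c3 !coef0 eqxx. Qed.

Lemma sup_mulr P r f : up P -> sup P f -> sup P (r * f).
Proof.
move=> uP hf a b c /c3M [i [j [l [hi hj hl _ /hf H]]]].
apply: (uP _ _ _ _ _ _ H); exact: leq_subr.
Qed.

Lemma sup_sum P (I : eqType) (r : seq I) (F : I -> Q k) :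
  (forall i, i \in r -> sup P (F i)) -> sup P (\sum_(i <- r) F i).
Proof.
elim: r => [|x r IH] H; first by rewrite big_nil; exact: sup0.
rewrite big_cons; apply: sup_add; first by apply: H; rewrite inE eqxx.
by apply: IH => i ir; apply: H; rewrite inE ir orbT.
Qed.

Lemma sup_mono P a b c : up P -> P a b c -> sup P (mono a b c).
Proof. by move=> uP H i j l /c3mono [h1 h2 h3]; exact: (uP _ _ _ _ _ _ H). Qed.

Lemma ideal_sum (J : subsetQ k) (I : eqType) (r : seq I) (F : I -> Q k) :
  is_idealQ J -> (forall i, i \in r -> J (F i)) -> J (\sum_(i <- r) F i).
Proof.
case=> J0 JD JM; elim: r => [|x r IH] H; first by rewrite big_nil.
rewrite big_cons; apply: JD; first by apply: H; rewrite inE eqxx.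
by apply: IH => i ir; apply: H; rewrite inE ir orbT.
Qed.

Lemma gen_ideal (S : subsetQ k) : is_idealQ (gen S).
Proof.
split.
- by exists [::]; rewrite big_nil.
- move=> f g [r1 [h1 ->]] [r2 [h2 ->]]; exists (r1 ++ r2); split.
    by move=> p; rewrite mem_cat => /orP [/h1|/h2].
  by rewrite big_cat.
- move=> r f [rs [h ->]]; exists [seq (r * p.1, p.2) | p <- rs]; split.
    by move=> p /mapP [q /h ? ->].
  rewrite big_map mulr_sumr; apply: eq_bigr => p _; by rewrite mulrA.
Qed.

Lemma gen_in (S : subsetQ k) x : S x -> gen S x.
Proof.
move=> Sx; exists [:: (1, x)]; split; first by move=> p; rewrite inE => /eqP ->.
by rewrite big_cons big_nil mul1r addr0.
Qed.

Definition PM (J : subsetQ k) a b c := J (mono a b c).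

Lemma upJ J : is_idealQ J -> up (PM J).
Proof.
case=> _ _ JM a b c a' b' c' H ha hb hc; rewrite /PM.
rewrite -(subnK ha) -(subnK hb) -(subnK hc) -monoM; exact: JM.
Qed.

Lemma J_sup J f : monomial_ideal J -> J f -> sup (PM J) f.
Proof.
case=> iJ eJ /eJ [rs [h ->]]; apply: sup_sum => p /h [[a [b [c e]]] Jp].
apply: sup_mulr; first exact: upJ.
by rewrite e; apply: sup_mono; [exact: upJ | rewrite /PM -e].
Qed.

Lemma sup_J J f : is_idealQ J -> sup (PM J) f -> J f.
Proof.
move=> iJ H; rewrite [f]expand.
apply: ideal_sum => // i _; apply: ideal_sum => // j _; apply: ideal_sum => // l _.
case: iJ => J0 JD JM.
case: (eqVneq (f`_i`_j`_l) 0) => [->|nz]; first by rewrite !polyC0 mul0r.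
apply: (JM); exact: H.
Qed.

Definition PI (J K : subsetQ k) a b c := exists a1 b1 c1 a2 b2 c2,
  [/\ PM J a1 b1 c1, PM K a2 b2 c2, (a1 + a2 <= a)%N, (b1 + b2 <= b)%N & (c1 + c2 <= c)%N].

Lemma upI J K : up (PI J K).
Proof.
move=> a b c a' b' c' [a1 [b1 [c1 [a2 [b2 [c2 [h1 h2 h3 h4 h5]]]]]]] ha hb hc.
exists a1, b1, c1, a2, b2, c2; split => //; lia.
Qed.

Lemma I_sup J K f : monomial_ideal J -> monomial_ideal K -> idmul J K f -> sup (PI J K) f.
Proof.
move=> mJ mK [rs [h ->]]; apply: sup_sum => p /h [f1 [g1 [Jf [Kg e]]]].
apply: sup_mulr; first exact: upI.
rewrite e => a b c /c3M [i [j [l [hi hj hl /(J_sup mJ Jf) H1 /(J_sup mK Kg) H2]]]].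
exists i, j, l, (a - i)%N, (b - j)%N, (c - l)%N; split => //; lia.
Qed.

Lemma sup_I J K f : sup (PI J K) f -> idmul J K f.
Proof.
move=> H; rewrite [f]expand.
have iI := gen_ideal (fun h => exists f g, J f /\ K g /\ h = f * g).
apply: ideal_sum => // i _; apply: ideal_sum => // j _; apply: ideal_sum => // l _.
case: (iI) => J0 JD JM.
case: (eqVneq (f`_i`_j`_l) 0) => [->|nz]; first by rewrite !polyC0 mul0r.
apply: (JM); move: (H _ _ _ nz); move: (nat_of_ord i) (nat_of_ord j) (nat_of_ord l) => a b c.
move=> [a1 [b1 [c1 [a2 [b2 [c2 [h1 h2 h3 h4 h5]]]]]]].
rewrite -(subnK h3) -(subnK h4) -(subnK h5) -monoM; apply: (JM); rewrite -monoM.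
apply: gen_in; by exists (mono a1 b1 c1), (mono a2 b2 c2).
Qed.

Lemma comb J K : ~ PM J 0 0 0 -> ~ PM K 0 0 0 ->
  forall u1 u2 u3 v1 v2 v3, PI J K u1.+1 u2 u3 -> PI J K v1 v2.+1 v3 ->
  PI J K v1 v2 v3.+1 -> PI J K (u1 + v1) (u2 + v2) (u3 + v3).
Proof.
move=> nJ nK u1 u2 u3 v1 v2 v3 Hx Hy Hz.
case: (ltnP 0 v1) => hv1.
  case: Hx => [a1 [b1 [c1 [a2 [b2 [c2 [h1 h2 h3 h4 h5]]]]]]].
  exists a1, b1, c1, a2, b2, c2; split => //; lia.
case: (ltnP 0 u2) => hu2.
  case: Hy => [a1 [b1 [c1 [a2 [b2 [c2 [h1 h2 h3 h4 h5]]]]]]].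
  exists a1, b1, c1, a2, b2, c2; split => //; lia.
case: (ltnP 0 u3) => hu3.
  case: Hz => [a1 [b1 [c1 [a2 [b2 [c2 [h1 h2 h3 h4 h5]]]]]]].
  exists a1, b1, c1, a2, b2, c2; split => //; lia.
case: Hx => [a1 [b1 [c1 [a2 [b2 [c2 [h1 h2 h3 h4 h5]]]]]]].
have ha1 : (0 < a1)%N.
  case: (posnP a1) => // e; exfalso; apply: nJ.
  have eb : b1 = 0%N by lia. have ec : c1 = 0%N by lia.
  by move: h1; rewrite e eb ec.
have ha2 : (0 < a2)%N.
  case: (posnP a2) => // e; exfalso; apply: nK.
  have eb : b2 = 0%N by lia. have ec : c2 = 0%N by lia.
  by move: h2; rewrite e eb ec.
case: Hy => [a3 [b3 [c3 [a4 [b4 [c4 [g1 g2 g3 g4 g5]]]]]]].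
case: (leqP (b3 + b4) v2) => hb.
  exists a3, b3, c3, a4, b4, c4; split => //; lia.
case: (ltnP 0 b3) => hb3.
  exists a1, b1, c1, a4, b4, c4; split => //; lia.
exists a3, b3, c3, a2, b2, c2; split => //; lia.
Qed.

End S.

Theorem mainTheorem6 (k : fieldType) (J K : subsetQ k) :
  monomial_ideal J -> proper_idealQ J ->
  monomial_ideal K -> proper_idealQ K ->
  let I := idmul J K in
  subsetQI (idmul (colon I (principalQ (varx k))) (colon I (ideal_yz k))) I.
Proof.
move=> mJ [iJ nJ] mK [iK nK] I h [rs [hrs ->]].
apply: ideal_sum; first exact: gen_ideal.
move=> p /hrs [f [g [cf [cg ->]]]].
case: (gen_ideal (fun h => exists f g, J f /\ K g /\ h = f * g)) => _ _ JM.
apply: JM; apply: sup_I.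
have hx := I_sup mJ mK (cf _ (gen_in (erefl (varx k)))).
have hy := I_sup mJ mK (cg _ (gen_in (or_introl (erefl (vary k))))).
have hz := I_sup mJ mK (cg _ (gen_in (or_intror (erefl (varz k))))).
have nJ0 : ~ PM J 0 0 0 by rewrite /PM mono0.
have nK0 : ~ PM K 0 0 0 by rewrite /PM mono0.
move=> a b c /c3M [i [j [l [hi hj hl nf ng]]]].
have Px : PI J K i.+1 j l by apply: hx; rewrite c3x.
have Py : PI J K (a - i) (b - j).+1 (c - l) by apply: hy; rewrite c3y.
have Pz : PI J K (a - i) (b - j) (c - l).+1 by apply: hz; rewrite c3z.
by have := comb nJ0 nK0 Px Py Pz; rewrite !subnKC.
Qed.
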